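(* Let $c_1,c_2>0$ be constants. For positive integers $n,m$, consider the distribution $\mu$ on $\Sigma^{[n]\times[m]}$ obtained by choosing a function $\ell\colon[m]\to[n]$ uniformly at random and setting $x_{i,j}=(0,\bot,\bot,\bot)$ if $i=\ell(j)$ and $x_{i,j}=(1,\bot,\bot,\bot)$ otherwise. Let $\mathcal A$ be a randomized decision tree (a probability distribution over deterministic decision trees querying cells of $[n]\times[m]$) such that for every deterministic tree in its support and every input $x$ in the support of $\mu$, the tree terminates on $x$ only after it has either found at least $c_1 m$ cells with value $0$ or queried at least $c_2 nm$ cells. Then the maximum over $x$ in the support of $\mu$ of the expected number of queries made by $\mathcal A$ on $x$ is $\Omega(nm)$, where the constant in $\Omega$ depends only on $c_1,c_2$.
   Context: $\Sigma$ is an alphabet whose symbols are quadruples $(\text{value},\text{pointer},\text{pointer},\text{pointer})$ with value in $\{0,1\}$ and pointers in a set containing the null pointer $\bot$; a cell has value $0$ if the first component of its symbol is $0$. A query asks for the symbol $x_c$ of one cell $c$. *)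

(* Defs.v *)
From HB Require Import structures.
From mathcomp Require Import all_boot all_order all_algebra.
From mathcomp Require Import reals.
Set Implicit Arguments. Unset Strict Implicit. Unset Printing Implicit Defensive.
Import Order.TTheory GRing.Theory Num.Theory.
Local Open Scope ring_scope.

(* Alphabet Sigma: quadruples (value, pointer, pointer, pointer).
   value : bool, with [false] standing for 0 and [true] for 1.
   Pointers range over [option Pt]; the null pointer ⊥ is [None]. *)
Definition Sym (Pt : Type) : Type :=
  (bool * option Pt * option Pt * option Pt)%type.

Definition sym_value (Pt : Type) (s : Sym Pt) : bool := s.1.1.1.

Definition cell (n m : nat) : Type := ('I_n * 'I_m)%type.

Inductive dtree (C S : Type) : Type :=
| Leaf : bool -> dtree C S
| Node : C -> (S -> dtree C S) -> dtree C S.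

Fixpoint trace (C S : Type) (t : dtree C S) (x : C -> S) : seq C :=
  match t with
  | Leaf _ => [::]
  | Node c k => c :: trace (k (x c)) x
  end.

Definition nqueries (C S : Type) (t : dtree C S) (x : C -> S) : nat :=
  size (trace t x).

Definition ndistinct (C : eqType) (S : Type) (t : dtree C S) (x : C -> S) : nat :=
  size (undup (trace t x)).

Definition nzeros_found (C : eqType) (Pt : Type) (t : dtree C (Sym Pt))
    (x : C -> Sym Pt) : nat :=
  count (fun c => ~~ sym_value (x c)) (undup (trace t x)).

Definition input_of (n m : nat) (Pt : Type) (l : 'I_m -> 'I_n) :
    cell n m -> Sym Pt :=
  fun c => (c.1 != l c.2, None, None, None).

Definition in_supp_mu (n m : nat) (Pt : Type) (x : cell n m -> Sym Pt) : Prop :=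
  exists l : 'I_m -> 'I_n, x = input_of Pt l.

(* A randomized decision tree with finite support: k trees T i with
   probabilities w i (nonnegative, summing to 1). *)
Definition is_distribution (R : realType) (k : nat) (w : 'I_k -> R) : Prop :=
  (forall i, 0 <= w i) /\ \sum_(i < k) w i = 1.

Definition expected_queries (R : realType) (C S : Type) (k : nat)
    (w : 'I_k -> R) (T : 'I_k -> dtree C S) (x : C -> S) : R :=
  \sum_(i < k) w i * (nqueries (T i) x)%:R.

(* Main.v *)
Require Import Defs.
From HB Require Import structures.
From mathcomp Require Import all_boot all_order all_algebra.
From mathcomp Require Import reals zify.
Import Order.TTheory GRing.Theory Num.Theory.
From mathcomp Require Import lra.
Set Implicit Arguments. Unset Strict Implicit. Unset Printing Implicit Defensive.

Definition upd n m (l : {ffun 'I_m -> 'I_n}) (j : 'I_m) (v : 'I_n) : {ffun 'I_m -> 'I_n} :=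
  [ffun j' => if j' == j then v else l j'].

Lemma upd_sum n m (j : 'I_m) (Phi : {ffun 'I_m -> 'I_n} -> nat) :
  \sum_(l : {ffun 'I_m -> 'I_n}) \sum_(v < n) Phi (upd l j v) =
  (n * \sum_(l : {ffun 'I_m -> 'I_n}) Phi l)%N.
Proof.
have upd_upd : forall (l : {ffun 'I_m -> 'I_n}) a b, upd (upd l j a) j b = upd l j b.
  by move=> l a b; apply/ffunP => x; rewrite !ffunE; case: eqP.
have upd_j : forall (l : {ffun 'I_m -> 'I_n}) a, upd l j a j = a.
  by move=> l a; rewrite ffunE eqxx.
have upd_id : forall (l : {ffun 'I_m -> 'I_n}) b, (upd l j b == l) = (l j == b).
  move=> l b; apply/eqP/eqP => [<-|lj]; first by rewrite upd_j.
  by apply/ffunP => x; rewrite !ffunE; case: eqP => // ->; rewrite lj.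
have key : forall u v : 'I_n,
  \sum_(l : {ffun 'I_m -> 'I_n} | l j == u) Phi (upd l j v) =
  \sum_(l : {ffun 'I_m -> 'I_n} | l j == v) Phi l.
  move=> u v.
  rewrite (reindex_onto (fun l => upd l j u) (fun l => upd l j v)).
    apply: eq_big => l; first by rewrite upd_j eqxx upd_upd upd_id.
    by move=> /andP[_ /eqP ->].
  by move=> l /eqP lj; rewrite upd_upd; apply/eqP; rewrite upd_id lj.
rewrite (partition_big (fun l : {ffun 'I_m -> 'I_n} => l j) predT) //=.
rewrite -[n in (n * _)%N]card_ord -sum_nat_const.
apply: eq_bigr => u _.
rewrite exchange_big /=.
under eq_bigr => v _ do rewrite key.
by rewrite [RHS](partition_big (fun l : {ffun 'I_m -> 'I_n} => l j) predT).
Qed.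

Lemma size_count n m (s : seq (cell n m)) :
  size s = \sum_(j < m) count (fun c : cell n m => c.2 == j) s.
Proof.
elim: s => [|c s IH]; first by rewrite big1.
rewrite /= big_split /= -IH (bigD1 c.2) //= eqxx big1 // => j /negbTE.
by rewrite eq_sym => ->.
Qed.

Lemma zeros_le n m Pt (l : 'I_m -> 'I_n) (s : seq (cell n m)) :
  (count (fun c => ~~ sym_value (input_of Pt l c)) (undup s) <=
  \sum_(j < m) ((l j, j) \in s))%N.
Proof.
rewrite -size_filter.
set u := filter _ _.
have uu : uniq u by rewrite filter_uniq // undup_uniq.
have Hu : forall c, c \in u -> c = (l c.2, c.2) /\ c \in s.
  move=> [i j]; rewrite mem_filter mem_undup /sym_value /input_of /= negbK.
  by case/andP => /eqP -> ->.
rewrite -(size_map snd).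
have -> : \sum_(j < m) ((l j, j) \in s) = count (fun j => (l j, j) \in s) (enum 'I_m).
  rewrite -sum1_count big_enum_cond [RHS]big_mkcond /=; apply: eq_bigr => j _; by case: ((l j, j) \in s).
rewrite -size_filter; apply: uniq_leq_size.
  rewrite map_inj_in_uniq // => c d /Hu [-> _] /Hu [-> _] /= ->. done.
move=> j /mapP [c /Hu [ce cs] ->]; rewrite mem_filter mem_enum andbT.
by rewrite -ce.
Qed.
Lemma col_lemma n m Pt (j : 'I_m) (a : cell n m -> Sym Pt)
  (X : 'I_n -> cell n m -> Sym Pt)
  (H1 : forall v c, c.2 != j -> X v c = a c)
  (H2 : forall v i, X v (i, j) = (i != v, None, None, None))
  (t : dtree (cell n m) (Sym Pt)) (S : {set 'I_n}) :
  (#|S|.+1 * \sum_(v in S) ((v,j) \in trace t (X v)) <=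
   2 * \sum_(v in S) count (fun c : cell n m => c.2 == j) (trace t (X v)))%N.
Proof.
elim: t S => [b|[i j'] k IH] S.
  by rewrite big1 ?muln0.
case: (eqVneq j' j) => [->|hj].
  have Etr : forall v, trace (Node (i, j) k) (X v) =
     (i, j) :: trace (k (i != v, None, None, None)) (X v).
    by move=> v /=; rewrite H2.
  case: (boolP (i \in S)) => iS.
    rewrite !(big_setD1 i iS) /= in_cons eqxx /=.
    have E1 : \sum_(v in S :\ i) ((v, j) \in (i, j) :: trace (k (X v (i, j))) (X v)) =
       \sum_(v in S :\ i) ((v, j) \in trace (k (true, None, None, None)) (X v)).
      apply: eq_bigr => v; rewrite in_setD1 => /andP[vi _].
      by rewrite H2 in_cons xpair_eqE (negbTE vi) /= eq_sym vi.
    have E2 : \sum_(v in S :\ i) ((j == j) + count (fun c : cell n m => c.2 == j) (trace (k (X v (i, j))) (X v))) =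
       #|S :\ i| + \sum_(v in S :\ i) count (fun c : cell n m => c.2 == j) (trace (k (true, None, None, None)) (X v)).
      rewrite -sum1_card -big_split /=.
      apply: eq_bigr => v; rewrite in_setD1 => /andP[vi _].
      by rewrite H2 eq_sym vi eqxx.
    rewrite E1 E2.
    have := IH (true, None, None, None) (S :\ i).
    have Fle : (\sum_(v in S :\ i) ((v, j) \in trace (k (true, None, None, None)) (X v)) <= #|S :\ i|)%N.
      by rewrite -sum1_card; apply: leq_sum => v _; case: (_ \in _).
    rewrite (cardsD1 i S) iS.
    move: Fle.
    set F := \sum_(v in S :\ i) _.
    set Q := \sum_(v in S :\ i) _.
    set s := #|S :\ i|.
    set q := count _ _.
    move=> Fle IH'. rewrite eqxx /=. nia.
  have E1 : \sum_(v in S) ((v, j) \in trace (Node (i, j) k) (X v)) =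
     \sum_(v in S) ((v, j) \in trace (k (true, None, None, None)) (X v)).
    apply: eq_bigr => v vS.
    have vi : v != i by apply: contraNneq iS => <-.
    by rewrite Etr in_cons xpair_eqE (negbTE vi) /= eq_sym vi.
  have E2 : \sum_(v in S) count (fun c : cell n m => c.2 == j) (trace (Node (i, j) k) (X v)) =
     #|S| + \sum_(v in S) count (fun c : cell n m => c.2 == j) (trace (k (true, None, None, None)) (X v)).
    rewrite -sum1_card -big_split /=.
    apply: eq_bigr => v vS.
    have vi : v != i by apply: contraNneq iS => <-.
    by rewrite /= H2 eq_sym vi eqxx.
  rewrite E1 E2.
  have := IH (true, None, None, None) S.
  set F := \sum_(v in S) _.
  set Q := \sum_(v in S) _.
  move=> IH'. nia.
have E1 : \sum_(v in S) ((v, j) \in trace (Node (i, j') k) (X v)) =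
   \sum_(v in S) ((v, j) \in trace (k (a (i, j'))) (X v)).
  apply: eq_bigr => v _ /=; rewrite H1 // in_cons xpair_eqE.
  by rewrite [j == j']eq_sym (negbTE hj) andbF.
have E2 : \sum_(v in S) count (fun c : cell n m => c.2 == j) (trace (Node (i, j') k) (X v)) =
   \sum_(v in S) count (fun c : cell n m => c.2 == j) (trace (k (a (i, j'))) (X v)).
  by apply: eq_bigr => v _ /=; rewrite H1 // (negbTE hj).
by rewrite E1 E2 IH.
Qed.

Lemma tree_bound n m Pt (hn : (0 < n)%N) (t : dtree (cell n m) (Sym Pt)) :
  (n.+1 * \sum_(l : {ffun 'I_m -> 'I_n}) nzeros_found t (input_of Pt l) <=
   2 * \sum_(l : {ffun 'I_m -> 'I_n}) nqueries t (input_of Pt l))%N.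
Proof.
set F := fun (j : 'I_m) (l : {ffun 'I_m -> 'I_n}) =>
  nat_of_bool ((l j, j) \in trace t (input_of Pt l)).
set Q := fun (j : 'I_m) (l : {ffun 'I_m -> 'I_n}) =>
  count (fun c : cell n m => c.2 == j) (trace t (input_of Pt l)).
have perj : forall j, (n.+1 * \sum_l F j l <= 2 * \sum_l Q j l)%N.
  move=> j.
  rewrite -(leq_pmul2l hn) !(mulnCA n) -(upd_sum j (F j)) -(upd_sum j (Q j)).
  rewrite !big_distrr /=; apply: leq_sum => l _.
  have := col_lemma (j := j) (a := input_of Pt l) (X := fun v => input_of Pt (upd l j v))
     _ _ t [set: 'I_n].
  rewrite cardsT card_ord.
  have -> : \sum_(v in [set: 'I_n]) ((v, j) \in trace t (input_of Pt (upd l j v)))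
          = \sum_(v < n) F j (upd l j v).
    by apply: eq_big => [v|v _]; rewrite ?in_setT // /F ffunE eqxx.
  have -> : \sum_(v in [set: 'I_n]) count (fun c : cell n m => c.2 == j) (trace t (input_of Pt (upd l j v)))
          = \sum_(v < n) Q j (upd l j v).
    by apply: eq_big => [v|v _]; rewrite ?in_setT.
  apply.
    by move=> v c cj; rewrite /input_of ffunE (negbTE cj).
  by move=> v i; rewrite /input_of ffunE eqxx.
have H1 : (\sum_(l : {ffun 'I_m -> 'I_n}) nzeros_found t (input_of Pt l) <= \sum_l \sum_j F j l)%N.
  by apply: leq_sum => l _; apply: zeros_le.
have H2 : \sum_(l : {ffun 'I_m -> 'I_n}) nqueries t (input_of Pt l) = \sum_l \sum_j Q j l.
  by apply: eq_bigr => l _; rewrite /nqueries size_count.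
rewrite H2; apply: leq_trans (leq_mul (leqnn _) H1) _.
rewrite [X in (_ * X <= _)%N]exchange_big [X in (_ <= _ * X)%N]exchange_big !big_distrr /=.
by apply: leq_sum => j _; apply: perj.
Qed.

Local Open Scope ring_scope.

Lemma tree_real (R : realType) (c1 c2 : R) (hc1 : 0 < c1) (hc2 : 0 < c2)
  n m Pt (hn : (0 < n)%N) (t : dtree (cell n m) (Sym Pt)) :
  (forall l : {ffun 'I_m -> 'I_n},
     c1 * m%:R <= (nzeros_found t (input_of Pt l))%:R \/
     c2 * (n * m)%:R <= (ndistinct t (input_of Pt l))%:R) ->
  #|{ffun 'I_m -> 'I_n}|%:R * (Order.min (c1 / 2) c2 / 2 * (n * m)%:R)
    <= (\sum_(l : {ffun 'I_m -> 'I_n}) nqueries t (input_of Pt l))%:R.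
Proof.
move=> hyp.
set d := Order.min (c1 / 2) c2.
have hd1 : d <= c1 / 2 by rewrite /d ge_min lexx.
have hd2 : d <= c2 by rewrite /d ge_min lexx orbT.
have hb := tree_bound hn t.
set SZ := \sum_(l : {ffun 'I_m -> 'I_n}) nzeros_found t (input_of Pt l) in hb.
set SQ := \sum_(l : {ffun 'I_m -> 'I_n}) nqueries t (input_of Pt l) in hb *.
have hbR : (n.+1)%:R * (SZ%:R : R) <= 2 * SQ%:R.
  by rewrite -natrM -(natrM R 2) ler_nat.
have perl : forall l : {ffun 'I_m -> 'I_n},
   d * (n * m)%:R <= ((n%:R + 1) / 2) * (nzeros_found t (input_of Pt l))%:R
                     + (nqueries t (input_of Pt l))%:R.
  move=> l.
  have q0 : 0 <= (nqueries t (input_of Pt l))%:R :> R by [].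
  have z0 : 0 <= (nzeros_found t (input_of Pt l))%:R :> R by [].
  have n0 : 0 <= n%:R :> R by [].
  have m0 : 0 <= m%:R :> R by [].
  have dq : (ndistinct t (input_of Pt l))%:R <= (nqueries t (input_of Pt l))%:R :> R.
    by rewrite ler_nat /ndistinct /nqueries size_undup.
  rewrite natrM.
  set Z := (nzeros_found t (input_of Pt l))%:R in z0 *.
  set Qn := (nqueries t (input_of Pt l))%:R in q0 dq *.
  have nm0 : 0 <= n%:R * m%:R :> R by rewrite mulr_ge0.
  case: (hyp l) => h; rewrite ?natrM -/Z in h.
    have e1 : d * (n%:R * m%:R) <= c1 / 2 * (n%:R * m%:R) by rewrite ler_wpM2r.
    have e2 : c1 * m%:R * n%:R <= Z * n%:R by rewrite ler_wpM2r.
    lra.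
  have e1 : d * (n%:R * m%:R) <= c2 * (n%:R * m%:R) by rewrite ler_wpM2r.
  have : 0 <= (n%:R + 1) / 2 * Z by rewrite mulr_ge0 // divr_ge0 // addr_ge0.
  lra.
have hs : \sum_(l : {ffun 'I_m -> 'I_n}) d * (n * m)%:R <=
  \sum_(l : {ffun 'I_m -> 'I_n}) (((n%:R + 1) / 2) * (nzeros_found t (input_of Pt l))%:R
                     + (nqueries t (input_of Pt l))%:R).
  by apply: ler_sum => l _; apply: perl.
move: hs; rewrite sumr_const big_split /= -[X in _ <= X + _]mulr_sumr -!natr_sum -/SZ -/SQ.
move=> hs.
rewrite -mulr_natl in hs.
change #|xpredT| with #|{ffun 'I_m -> 'I_n}| in hs.
rewrite -/SQ -/SZ in hbR *.
set N := #|_|%:R in hs *.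
rewrite -addn1 natrD in hbR.
nra.
Qed.

Theorem lemma10 (R : realType) (c1 c2 : R) (hc1 : 0 < c1) (hc2 : 0 < c2) :
  exists C : R, 0 < C /\
  forall (n m : nat), (0 < n)%N -> (0 < m)%N ->
  forall (Pt : Type) (k : nat) (w : 'I_k -> R)
         (T : 'I_k -> dtree (cell n m) (Sym Pt)),
  is_distribution w ->
  (forall i, 0 < w i ->
     forall x : cell n m -> Sym Pt, in_supp_mu x ->
       c1 * m%:R <= (nzeros_found (T i) x)%:R \/
       c2 * (n * m)%:R <= (ndistinct (T i) x)%:R) ->
  exists x : cell n m -> Sym Pt, in_supp_mu x /\
    C * (n * m)%:R <= expected_queries w T x.
Proof.
exists (Order.min (c1 / 2) c2 / 2); split.
  by rewrite divr_gt0 // lt_min hc2 andbT divr_gt0.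
move=> n m hn hm Pt k w T [w0 w1] hyp.
set C := Order.min (c1 / 2) c2 / 2.
set N := #|{ffun 'I_m -> 'I_n}|.
have N0 : (0 < N)%N.
  apply/card_gt0P; exists [ffun _ => Ordinal hn]; done.
have tot : (N%:R * (C * (n * m)%:R)) <=
    \sum_(l : {ffun 'I_m -> 'I_n}) expected_queries w T (input_of Pt l).
  rewrite /expected_queries exchange_big /=.
  have -> : N%:R * (C * (n * m)%:R) = \sum_(i < k) w i * (N%:R * (C * (n * m)%:R)) :> R.
    by rewrite -mulr_suml w1 mul1r.
  apply: ler_sum => i _.
  rewrite -mulr_sumr -natr_sum.
  have := w0 i; rewrite le_eqVlt => /orP[/eqP <-|wp]; first by rewrite !mul0r.
  rewrite ler_pM2l //.
  apply: tree_real => // l.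
  by apply: hyp => //; exists l.
case: (boolP [exists l : {ffun 'I_m -> 'I_n}, C * (n * m)%:R <= expected_queries w T (input_of Pt l)]).
  by case/existsP => l hl; exists (input_of Pt l); split => //; exists l.
rewrite negb_exists => /forallP hall.
have : \sum_(l : {ffun 'I_m -> 'I_n}) expected_queries w T (input_of Pt l)
       < \sum_(l : {ffun 'I_m -> 'I_n}) C * (n * m)%:R.
  have l0 : {ffun 'I_m -> 'I_n} := [ffun _ => Ordinal hn].
  rewrite (bigD1 l0) // [X in _ < X](bigD1 l0) //=.
  apply: ltr_leD; first by rewrite ltNge hall.
  by apply: ler_sum => l _; apply/ltW; rewrite ltNge hall.
rewrite sumr_const -/N -[_ *+ N]mulr_natl => h.
by move: (lt_le_trans h tot); rewrite ltxx.
Qed.
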